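(* Let $Y$ be a real Hilbert space, let $Q\colon Y\to Y$ be a bounded linear operator, let $\lambda>0$, and suppose that $\langle y, Qy\rangle+\lambda\|y\|^2\le 0$ for all $y\in Y$. Then $Q$ touches every maximally monotone multifunction on $Y$; that is, for every maximally monotone $M\colon Y\rightrightarrows Y$, the set $G(M)\cap G(Q)$ is a singleton in $Y\times Y$.
   Context: For a multifunction (or function) $M$ on $Y$, $G(M)=\{(y,q)\in Y\times Y: q\in My\}$ denotes its graph. Two multifunctions $M,Q$ on $Y$ are said to touch if $G(M)\cap G(Q)$ is a singleton. *)

(* Defs.v *)
From HB Require Import structures.
From mathcomp Require Import all_boot all_order all_algebra.
From mathcomp Require Import all_classical all_reals all_analysis.
Set Implicit Arguments. Unset Strict Implicit. Unset Printing Implicit Defensive.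
Import Order.TTheory GRing.Theory Num.Theory.
Import numFieldNormedType.Exports.
Local Open Scope classical_set_scope.
Local Open Scope ring_scope.

Definition hilbert_inner (R : realType) (Y : completeNormedModType R)
    (ip : Y -> Y -> R) : Prop :=
  [/\ forall x y, ip x y = ip y x,
      forall a x y z, ip (a *: x + y) z = a * ip x z + ip y z
    & forall x, ip x x = `|x| ^+ 2].

Definition bounded_op (R : realType) (Y : completeNormedModType R)
    (Q : Y -> Y) : Prop :=
  exists C : R, forall y, `|Q y| <= C * `|y|.

Definition graph (Y : Type) (M : Y -> set Y) : set (Y * Y) :=
  [set p | M p.1 p.2].
Definition fgraph (Y : Type) (f : Y -> Y) : set (Y * Y) :=
  [set p | p.2 = f p.1].

Definition monotone_mf (R : realType) (Y : completeNormedModType R)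
    (ip : Y -> Y -> R) (M : Y -> set Y) : Prop :=
  forall x u y v, M x u -> M y v -> 0 <= ip (x - y) (u - v).

Definition maximally_monotone (R : realType) (Y : completeNormedModType R)
    (ip : Y -> Y -> R) (M : Y -> set Y) : Prop :=
  monotone_mf ip M /\
  forall M' : Y -> set Y, monotone_mf ip M' ->
    graph M `<=` graph M' -> graph M' = graph M.

Definition touch_fun (Y : Type) (M : Y -> set Y) (f : Y -> Y) : Prop :=
  exists p : Y * Y, graph M `&` fgraph f = [set p].

(* Main.v *)
Require Import Defs.
From HB Require Import structures.
From mathcomp Require Import all_boot all_order all_algebra.
From mathcomp Require Import all_classical all_reals all_analysis.
From mathcomp Require Import ring lra.
Import Order.TTheory GRing.Theory Num.Theory.
Import numFieldNormedType.Exports.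
Local Open Scope classical_set_scope.
Local Open Scope ring_scope.

Set Implicit Arguments. Unset Strict Implicit.


Lemma ipC (R : realType) (Y : completeNormedModType R) (ip : Y -> Y -> R) :
  hilbert_inner ip -> forall x y, ip x y = ip y x.
Proof. by case. Qed.

Lemma ip0l (R : realType) (Y : completeNormedModType R) (ip : Y -> Y -> R) :
  hilbert_inner ip -> forall z, ip 0 z = 0.
Proof.
case=> _ L _ z; have := L 1 0 0 z; rewrite scale1r addr0 mul1r.
move=> E; lra.
Qed.

Lemma ipDl (R : realType) (Y : completeNormedModType R) (ip : Y -> Y -> R) :
  hilbert_inner ip -> forall x y z, ip (x + y) z = ip x z + ip y z.
Proof. by move=> H x y z; case: (H) => _ L _; rewrite -[x]scale1r L mul1r scale1r. Qed.

Lemma ipZl (R : realType) (Y : completeNormedModType R) (ip : Y -> Y -> R) :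
  hilbert_inner ip -> forall a x z, ip (a *: x) z = a * ip x z.
Proof. by move=> H a x z; case: (H) => _ L _; rewrite -[a *: x]addr0 L (ip0l H) addr0. Qed.

Lemma ipNl (R : realType) (Y : completeNormedModType R) (ip : Y -> Y -> R) :
  hilbert_inner ip -> forall x z, ip (- x) z = - ip x z.
Proof. by move=> H x z; rewrite -scaleN1r (ipZl H) mulN1r. Qed.

Lemma ipBl (R : realType) (Y : completeNormedModType R) (ip : Y -> Y -> R) :
  hilbert_inner ip -> forall x y z, ip (x - y) z = ip x z - ip y z.
Proof. by move=> H x y z; rewrite (ipDl H) (ipNl H). Qed.

Lemma ipDr (R : realType) (Y : completeNormedModType R) (ip : Y -> Y -> R) :
  hilbert_inner ip -> forall x y z, ip z (x + y) = ip z x + ip z y.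
Proof. by move=> H x y z; rewrite !(ipC H z) (ipDl H). Qed.

Lemma ipZr (R : realType) (Y : completeNormedModType R) (ip : Y -> Y -> R) :
  hilbert_inner ip -> forall a x z, ip z (a *: x) = a * ip z x.
Proof. by move=> H a x z; rewrite !(ipC H z) (ipZl H). Qed.

Lemma ipNr (R : realType) (Y : completeNormedModType R) (ip : Y -> Y -> R) :
  hilbert_inner ip -> forall x z, ip z (- x) = - ip z x.
Proof. by move=> H x z; rewrite !(ipC H z) (ipNl H). Qed.

Lemma ipBr (R : realType) (Y : completeNormedModType R) (ip : Y -> Y -> R) :
  hilbert_inner ip -> forall x y z, ip z (x - y) = ip z x - ip z y.
Proof. by move=> H x y z; rewrite !(ipC H z) (ipBl H). Qed.

Lemma ip0r (R : realType) (Y : completeNormedModType R) (ip : Y -> Y -> R) :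
  hilbert_inner ip -> forall z, ip z 0 = 0.
Proof. by move=> H z; rewrite (ipC H) (ip0l H). Qed.

Lemma ipnorm (R : realType) (Y : completeNormedModType R) (ip : Y -> Y -> R) :
  hilbert_inner ip -> forall x, ip x x = `|x| ^+ 2.
Proof. by case. Qed.

Lemma ipxx_ge0 (R : realType) (Y : completeNormedModType R) (ip : Y -> Y -> R) :
  hilbert_inner ip -> forall x, 0 <= ip x x.
Proof. by move=> H x; rewrite (ipnorm H) sqr_ge0. Qed.

Lemma ipxx_eq0 (R : realType) (Y : completeNormedModType R) (ip : Y -> Y -> R) :
  hilbert_inner ip -> forall x, ip x x <= 0 -> x = 0.
Proof.
move=> H x; rewrite (ipnorm H) => h; apply/normr0_eq0.
by apply/eqP; rewrite -sqrf_eq0 eq_le h sqr_ge0.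
Qed.

Lemma ip_le (R : realType) (Y : completeNormedModType R) (ip : Y -> Y -> R) :
  hilbert_inner ip -> forall x y, 2 * ip x y <= ip x x + ip y y.
Proof.
move=> H x y; have := ipxx_ge0 H (x - y).
rewrite (ipBl H) !(ipBr H) (ipC H y x); lra.
Qed.

Lemma ip_polar (R : realType) (Y : completeNormedModType R) (ip : Y -> Y -> R) :
  hilbert_inner ip -> forall x y, ip x y = (`|x + y| ^+ 2 - `|x| ^+ 2 - `|y| ^+ 2) / 2.
Proof.
move=> H x y; rewrite -!(ipnorm H) (ipDl H) !(ipDr H) (ipC H y x); by field.
Qed.

Lemma maxmono_add (R : realType) (Y : completeNormedModType R) (ip : Y -> Y -> R)
  (M : Y -> set Y) : hilbert_inner ip -> maximally_monotone ip M ->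
  forall a b, (forall y v, M y v -> 0 <= ip (a - y) (b - v)) -> M a b.
Proof.
move=> H [mon max] a b rel.
pose M' := fun x => [set w | M x w \/ (x = a /\ w = b)].
have monM' : monotone_mf ip M'.
  move=> x u y v [Mxu|[-> ->]] [Myv|[-> ->]].
  - exact: mon.
  - have := rel _ _ Mxu; rewrite -(opprB a) -(opprB b) (ipNl H) (ipNr H) opprK //.
  - exact: rel.
  - by rewrite subrr (ip0l H).
have := max M' monM' (fun p Mp => or_introl Mp).
move/(congr1 (fun S => S (a, b))) => /=.
move=> E; have : graph M' (a, b) by right.
by rewrite E.
Qed.


Lemma ip_cvg (R : realType) (Y : completeNormedModType R) (ip : Y -> Y -> R)
  (xs ws : nat -> Y) (x w : Y) : hilbert_inner ip ->
  xs n @[n --> \oo] --> x -> ws n @[n --> \oo] --> w ->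
  ip (xs n) (ws n) @[n --> \oo] --> ip x w.
Proof.
move=> H cx cw.
have -> : (fun n => ip (xs n) (ws n)) =
  (fun n => (`|xs n + ws n| * `|xs n + ws n| - `|xs n| * `|xs n|
             - `|ws n| * `|ws n|) * 2^-1).
  by apply/funext => n; rewrite (ip_polar H) !expr2.
rewrite (ip_polar H) !expr2.
apply: cvgM; last exact: cvg_cst.
have cxw : (xs n + ws n) @[n --> \oo] --> x + w by apply: cvgD.
apply: cvgB; first apply: cvgB.
- by apply: cvgM; apply: cvg_norm.
- by apply: cvgM; apply: cvg_norm.
- by apply: cvgM; apply: cvg_norm.
Qed.

Lemma cvg_of_sq (R : realType) (Y : completeNormedModType R) (z : nat -> Y)
  (K : R) : 0 <= K ->
  (forall n k, `|z n - z k| ^+ 2 <= K * (n.+1%:R^-1 + k.+1%:R^-1)) ->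
  cvgn z.
Proof.
move=> K0 Hz; apply/cauchy_cvgP; apply: cauchy_exP => e e0.
pose N := Num.Def.archi_bound (2 * K / e ^+ 2).
have hN : 2 * K / e ^+ 2 < N%:R.
  by apply: archi_boundP; apply: divr_ge0; [apply: mulr_ge0 | apply: sqr_ge0].
exists (z N). exists N => // n /= Nn.
rewrite -ball_normE /=.
have e2 : 0 < e ^+ 2 by rewrite exprn_gt0.
have hn : n.+1%:R^-1 <= N.+1%:R^-1 :> R.
  by rewrite lef_pV2 ?posrE ?ltr0Sn // ler_nat ltnS.
have hN1 : K * (2 * N.+1%:R^-1) < e ^+ 2.
  have h2 : 2 * K < e^+2 * N.+1%:R.
    move: hN; rewrite ltr_pdivrMr // => h; apply: (lt_le_trans h).
    by rewrite mulrC ler_wpM2l ?ltW // ltr_nat.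

  have -> : K * (2 / N.+1%:R) = (2 * K) / N.+1%:R by ring.
  by rewrite ltr_pdivrMr ?ltr0Sn.
have hlt : `|z N - z n| ^+ 2 < e ^+ 2.
  apply: (le_lt_trans (Hz N n)); apply: le_lt_trans hN1.
  apply: ler_wpM2l => //; move: hn.
  set a := N.+1%:R^-1; set b := n.+1%:R^-1; rewrite -/a; lra.
have := normr_ge0 (z N - z n).
move: hlt; set d := `|z N - z n|; rewrite !expr2 => hlt hd.
rewrite ltNge; apply/negP => h.
have := ler_pM (ltW e0) (ltW e0) h h; rewrite leNgt hlt //.
Qed.


Lemma lim_t0 (R : realType) (K Q : R) :
  (forall t, 0 < t -> t <= 1 -> 0 <= K + t * Q) -> 0 <= Q -> 0 <= K.
Proof.
move=> h Q0; rewrite leNgt; apply/negP => K0.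
have d0 : 0 < Q - K + 1 by lra.
pose t := - K / (Q - K + 1).
have t0 : 0 < t by rewrite /t divr_gt0 //; lra.
have t1 : t <= 1 by rewrite /t ler_pdivrMr //; lra.
have := h t t0 t1.
have -> : K + t * Q = K * (1 - K) / (Q - K + 1).
  by rewrite /t; field; lra.
rewrite pmulr_lge0 ?invr_gt0 //; nra.
Qed.

Lemma hq_shift (R : realType) (Y : completeNormedModType R) (ip : Y -> Y -> R)
  (a b d w : Y) (t : R) : hilbert_inner ip ->
  (ip (a + t *: d) (a + t *: d) + ip (b + t *: w) (b + t *: w)) / 2 =
  (ip a a + ip b b) / 2 + t * (ip a d + ip b w) + t ^+ 2 * ((ip d d + ip w w) / 2).
Proof.
move=> H; rewrite !(ipDl H, ipDr H, ipZl H, ipZr H) (ipC H d a) (ipC H w b).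
by field.
Qed.

Lemma phi_shift (R : realType) (Y : completeNormedModType R) (ip : Y -> Y -> R)
  (a b y v y' v' : Y) (t : R) : hilbert_inner ip ->
  ip (a + t *: (y - a)) v' + ip y' (b + t *: (v - b)) - ip y' v' =
  (1 - t) * (ip a v' + ip y' b - ip y' v') + t * (ip y v' + ip y' v - ip y' v').
Proof.
move=> H; rewrite !(ipDl H, ipDr H, ipZl H, ipZr H, ipBl H, ipBr H, ipNl H, ipNr H).
ring.
Qed.

Lemma mid_id (R : realType) (Y : completeNormedModType R) (ip : Y -> Y -> R)
  (x u x' u' y v : Y) : hilbert_inner ip ->
  let phi x u := ip x v + ip y u - ip y v in
  let hq x u := (ip x x + ip u u) / 2 in
  phi (2^-1 *: (x + x')) (2^-1 *: (u + u')) + hq (2^-1 *: (x + x')) (2^-1 *: (u + u'))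
  = ((phi x u + hq x u) + (phi x' u' + hq x' u')) / 2
    - (ip (x - x') (x - x') + ip (u - u') (u - u')) / 8.
Proof.
move=> H phi hq; rewrite /phi /hq.
rewrite !(ipDl H, ipDr H, ipZl H, ipZr H, ipBl H, ipBr H, ipNl H, ipNr H) (ipC H x' x) (ipC H u' u).
by field.
Qed.


Lemma minty_core (R : realType) (Y : completeNormedModType R) (ip : Y -> Y -> R)
  (M : Y -> set Y) : hilbert_inner ip -> maximally_monotone ip M ->
  exists x, M x (- x).
Proof.
move=> H MM; have mon := MM.1.
pose hq (x u : Y) := (ip x x + ip u u) / 2.
pose phi (y v x u : Y) := ip x v + ip y u - ip y v.
pose S (c : R) (x u : Y) := forall y v, M y v -> phi y v x u + hq x u <= c.
pose A := [set c | exists x u, S c x u].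
have key0 : forall x u, 0 <= ip x u + hq x u.
  move=> x u; have := ipxx_ge0 H (x + u).
  rewrite (ipDl H) !(ipDr H) (ipC H u x) /hq; lra.
have rel_exp : forall x u y v, ip (x - y) (u - v) = ip x u - phi y v x u.
  by move=> x u y v; rewrite (ipBl H) !(ipBr H) /phi; ring.
have phi_mono : forall x u y v, M x u -> M y v -> phi y v x u <= ip x u.
  move=> x u y v Mxu Myv; have := mon x u y v Mxu Myv; rewrite rel_exp; lra.
have Slb : forall c x u, S c x u -> 0 <= c.
  move=> c x u Sc; rewrite leNgt; apply/negP => c0.
  have Mxu : M x u.
    apply: (maxmono_add H MM) => y v Myv; rewrite rel_exp.
    have := Sc y v Myv; have := key0 x u; lra.
  have := Sc x u Mxu; have := key0 x u; rewrite /phi; lra.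
have [y0 [v0 M0]] : exists y v, M y v.
  case: (pselect (exists y v, M y v)) => // N0.
  exists 0, 0; apply: (maxmono_add H MM) => y v Myv; exfalso; apply: N0.
  by exists y, v.
have A0 : A (ip y0 v0 + hq y0 v0).
  by exists y0, v0 => y v Myv; have := phi_mono _ _ _ _ M0 Myv; lra.
have Alb : lbound A 0 by move=> c [x [u Sc]]; exact: Slb Sc.
have hasinf : has_inf A by split; [exists (ip y0 v0 + hq y0 v0) | exists 0].
pose m := inf A.
have m0 : 0 <= m by apply: lb_le_inf => //; exists (ip y0 v0 + hq y0 v0).
have mle : forall c x u, S c x u -> m <= c.
  by move=> c x u Sc; apply: (ge_inf hasinf.2); exists x, u.
have Smono : forall c c' x u, c <= c' -> S c x u -> S c' x u.
  by move=> c c' x u cc' Sc y v Myv; apply: le_trans (Sc y v Myv) cc'.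
have adh : forall e, 0 < e -> exists x u, S (m + e) x u.
  move=> e e0; have [c [x [u Sc]] hc] := inf_adherent e0 hasinf.
  by exists x, u; apply: Smono Sc; exact: ltW.
have mid : forall c c' x u x' u', S c x u -> S c' x' u' ->
   S ((c + c') / 2 - (ip (x - x') (x - x') + ip (u - u') (u - u')) / 8)
     (2^-1 *: (x + x')) (2^-1 *: (u + u')).
  move=> c c' x u x' u' S1 S2 y v Myv.
  have := mid_id x u x' u' y v H; rewrite /= -/(phi y v) -/hq => ->.
  have := S1 y v Myv; have := S2 y v Myv; rewrite /phi /hq; lra.
have sq : forall n : nat, exists p : Y * Y, S (m + n.+1%:R^-1) p.1 p.2.
  move=> n; have e0 : 0 < n.+1%:R^-1 :> R by rewrite invr_gt0 ltr0Sn.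
  have [x [u Sc]] := adh _ e0.
  by exists (x, u).
have [f Hf] := choice sq.
pose xs n := (f n).1; pose us n := (f n).2.
have bnd : forall n k, ip (xs n - xs k) (xs n - xs k) + ip (us n - us k) (us n - us k)
   <= 4 * (n.+1%:R^-1 + k.+1%:R^-1).
  move=> n k; have := mle _ _ _ (mid _ _ _ _ _ _ (Hf n) (Hf k)).
  rewrite -/(xs n) -/(xs k) -/(us n) -/(us k).
  set D := _ + ip _ _; set a := n.+1%:R^-1; set b := k.+1%:R^-1.
  lra.
have cx : cvgn xs.
  apply: (@cvg_of_sq _ _ _ 4) => // n k; rewrite -(ipnorm H).
  have := bnd n k; have := ipxx_ge0 H (us n - us k).
  set a := n.+1%:R^-1; set b := k.+1%:R^-1; lra.
have cu : cvgn us.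
  apply: (@cvg_of_sq _ _ _ 4) => // n k; rewrite -(ipnorm H).
  have := bnd n k; have := ipxx_ge0 H (xs n - xs k).
  set a := n.+1%:R^-1; set b := k.+1%:R^-1; lra.
pose a := limn xs; pose b := limn us.
have Sab : S m a b.
  move=> y v Myv; apply/ler_addgt0Pr => e e0.
  have lim : (phi y v (xs n) (us n) + hq (xs n) (us n)) @[n --> \oo] -->
             phi y v a b + hq a b.
    rewrite /phi /hq; apply: cvgD; first apply: cvgB; first apply: cvgD.
    - exact: (ip_cvg H cx (cvg_cst v)).
    - exact: (ip_cvg H (cvg_cst y) cu).
    - exact: cvg_cst.
    - apply: cvgM; last exact: cvg_cst.
      by apply: cvgD; apply: ip_cvg.
  apply: (cvgr_to_le lim).
  pose N := Num.Def.archi_bound (e^-1).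
  have hN : e^-1 < N%:R by apply: archi_boundP; rewrite invr_ge0 ltW.
  exists N => // n /= Nn.
  apply: le_trans (Hf n y v Myv) _; rewrite lerD2l.
  rewrite -[e]invrK lef_pV2 ?posrE ?invr_gt0 ?ltr0Sn //.
  apply: (le_trans (ltW hN)); rewrite ler_nat; exact: leqW.
have opt : forall y v, M y v -> 0 <= ip y v + ip a y + ip b v - m - hq a b.
  move=> y v Myv.
  apply: (@lim_t0 _ _ ((ip (y - a) (y - a) + ip (v - b) (v - b)) / 2)); last first.
    by apply: divr_ge0 => //; apply: addr_ge0; apply: ipxx_ge0.
  move=> t t0 t1.
  have St : S ((1 - t) * (m - hq a b) + t * ip y v
               + hq (a + t *: (y - a)) (b + t *: (v - b)))
             (a + t *: (y - a)) (b + t *: (v - b)).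
    move=> y' v' My'v'; have h1 := Sab y' v' My'v'.
    have h2 := phi_mono _ _ _ _ Myv My'v'.
    rewrite /phi phi_shift // -/(phi y' v' a b) -/(phi y' v' y v).
    have : (1 - t) * phi y' v' a b <= (1 - t) * (m - hq a b).
      by apply: ler_wpM2l; lra.
    have : t * phi y' v' y v <= t * ip y v by apply: ler_wpM2l => //; lra.
    lra.
  have := mle _ _ _ St; rewrite /hq hq_shift // (ipBr H y a a) (ipBr H v b b).
  rewrite -subr_ge0 => hm.
  have : 0 <= t * ((ip y v + ip a y + ip b v - m - hq a b) +
       t * ((ip (y - a) (y - a) + ip (v - b) (v - b)) / 2)).
    apply: (le_trans hm); rewrite /hq le_eqVlt; apply/orP; left; apply/eqP.
    by field.
  by rewrite pmulr_rge0.
have Mba : M (- b) (- a).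
  apply: (maxmono_add H MM) => y v Myv; have := opt y v Myv.
  have := ipxx_ge0 H (a + b).
  rewrite !(ipDl H, ipDr H, ipNl H, ipNr H, ipBl H, ipBr H) (ipC H y a) (ipC H b a) /hq.
  lra.
have := opt _ _ Mba; have := ipxx_ge0 H (a + b).
rewrite !(ipDl H, ipDr H, ipNl H, ipNr H) (ipC H b a) /hq => h1 h2.
have ab : a + b = 0.
  apply: (ipxx_eq0 H); rewrite !(ipDl H, ipDr H) (ipC H b a); lra.
have ba : b = - a by apply/eqP; rewrite -addr_eq0 addrC ab.
by exists a; move: Mba; rewrite ba opprK.
Qed.


Lemma maxmono_transform (R : realType) (Y : completeNormedModType R)
  (ip : Y -> Y -> R) (M : Y -> set Y) (s : R) (z : Y) :
  hilbert_inner ip -> maximally_monotone ip M -> 0 < s ->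
  maximally_monotone ip (fun x => [set w | M x (s *: (z + w))]).
Proof.
move=> H [mon max] s0.
have e1 : forall (r : R) x y w w', ip (x - y) (r *: (z + w) - r *: (z + w'))
    = r * ip (x - y) (w - w').
  by move=> r x y w w'; rewrite !(ipBr H, ipZr H, ipDr H, ipNr H); ring.
split.
  move=> x w y w' /= Mx My; have := mon _ _ _ _ Mx My.
  by rewrite e1 pmulr_rge0.
move=> M'' mon'' sub.
pose M3 := fun x => [set u | M'' x (s^-1 *: u - z)].
have mon3 : monotone_mf ip M3.
  move=> x u y u' /= h1 h2; have := mon'' _ _ _ _ h1 h2 => h.
  suff -> : ip (x - y) (u - u') =
      s * ip (x - y) (s^-1 *: u - z - (s^-1 *: u' - z)).
    by apply: mulr_ge0 => //; exact: ltW.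
  rewrite !(ipBr H, ipZr H); field; by rewrite gt_eqF.
have sub3 : graph M `<=` graph M3.
  move=> [x u] /= Mxu; apply: (sub (x, s^-1 *: u - z)) => /=.
  by rewrite /graph /= (addrC z) subrK scalerA mulfV ?gt_eqF // scale1r.
have E := max M3 mon3 sub3.
apply/seteqP; split => // [[x w]] /= h.
have : graph M3 (x, s *: (z + w)).
  by rewrite /graph /M3 /= scalerA mulVf ?gt_eqF // scale1r (addrC z) addrK.
by rewrite E.
Qed.

Lemma resolvent (R : realType) (Y : completeNormedModType R)
  (ip : Y -> Y -> R) (M : Y -> set Y) (c : R) :
  hilbert_inner ip -> maximally_monotone ip M -> 0 < c ->
  forall z, exists x, M x (c^-1 *: (z - x)).
Proof.
move=> H MM c0 z.
have ci : 0 < c^-1 by rewrite invr_gt0.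
have [x Mx] := minty_core H (@maxmono_transform _ _ _ _ _ z H MM ci).
by exists x; move: Mx => /=; rewrite addrC.
Qed.

Unset Implicit Arguments. Set Strict Implicit.


Lemma my_banach (R : realType) (X : completeNormedModType R) (f : X -> X) (q : R) :
  0 <= q -> q < 1 -> (forall x y, `|f x - f y| <= q * `|x - y|) -> exists x, f x = x.
Proof.
move=> q0 q1 Hf.
have := @banach_fixed_point R X setT (@mkfun _ _ setT setT f (fun _ _ => I)).
case.
- exists (NngNum q0); split => //.
  move=> [x y] _ /=; exact: Hf.
- exact: closedT.
- by exists 0.
by move=> x _ e; exists x; rewrite {2}e.
Qed.

Lemma sq_le_norm (R : realType) (a b : R) : 0 <= a -> 0 <= b -> a ^+ 2 <= b ^+ 2 -> a <= b.
Proof.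
move=> a0 b0 h; rewrite leNgt; apply/negP => lt.
have := ltrXn2r 2 b0 lt; rewrite /= => h2; lra.
Qed.

Theorem corollary2p8 (R : realType) (Y : completeNormedModType R)
    (ip : Y -> Y -> R) (Q : {linear Y -> Y}) (lam : R) :
  hilbert_inner ip -> bounded_op Q -> 0 < lam ->
  (forall y : Y, ip y (Q y) + lam * `|y| ^+ 2 <= 0) ->
  forall M : Y -> set Y, maximally_monotone ip M -> touch_fun M Q.
Proof.
move=> H [C HC] lam0 Hneg M MM.
have mon := MM.1.
have uniq : forall x y, M x (Q x) -> M y (Q y) -> x = y.
  move=> x y Mx My; have := mon _ _ _ _ Mx My.
  rewrite -linearB /=; have := Hneg (x - y); rewrite -(ipnorm H) => h1 h2.
  apply/eqP; rewrite -subr_eq0; apply/eqP; apply: (ipxx_eq0 H).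
  have : lam * ip (x - y) (x - y) <= 0 by lra.
  by rewrite pmulr_rle0.
pose D := C ^+ 2 + lam ^+ 2.
have D0 : 0 < D.
  rewrite /D; have := sqr_ge0 C; have : 0 < lam ^+ 2 by rewrite exprn_gt0.
  lra.
pose c := lam / D.
have c0 : 0 < c by rewrite /c divr_gt0.
have [J HJ] := choice (resolvent H MM c0).
have Jne : forall z1 z2, `|J z1 - J z2| <= `|z1 - z2|.
  move=> z1 z2; have := mon _ _ _ _ (HJ z1) (HJ z2).
  rewrite -scalerBr (ipZr H) pmulr_rge0 ?invr_gt0 // !(ipBr H) => h.
  have := ip_le H (J z1 - J z2) (z1 - z2).
  rewrite !(ipBr H) => h2.
  have : ip (J z1 - J z2) (J z1 - J z2) <= ip (z1 - z2) (z1 - z2).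
    rewrite (ipBr H (J z1) (J z2) (J z1 - J z2)) (ipBr H z1 z2 (z1 - z2)); lra.
  rewrite !(ipnorm H) => h3.
  by apply: sq_le_norm.
pose T := fun x => J (x + c *: Q x).
pose k := 1 - c * lam / 2.
have cl1 : c * lam <= 1.
  rewrite /c mulrAC ler_pdivrMr // mul1r /D -expr2; have := sqr_ge0 C; lra.
have cC : c * C ^+ 2 <= lam.
  rewrite /c mulrAC ler_pdivrMr // /D mulrDr; have : 0 <= lam * lam ^+ 2.
    by apply: mulr_ge0; [exact: ltW | exact: sqr_ge0].
  lra.
have k0 : 0 <= k by rewrite /k; lra.
have k1 : k < 1 by rewrite /k; have := mulr_gt0 c0 lam0; lra.
have contr : forall x y, `|T x - T y| <= k * `|x - y|.
  move=> x y; apply: le_trans (Jne _ _) _.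
  have -> : x + c *: Q x - (y + c *: Q y) = (x - y) + c *: Q (x - y).
    by rewrite linearB scalerBr opprD addrACA.
  move: (x - y) => w.
  have hw := Hneg w; have hQ := HC w.
  have N2 : `|Q w| ^+ 2 <= C ^+ 2 * `|w| ^+ 2.
    rewrite -exprMn; apply: lerXn2r => //; rewrite ?nnegrE //.
    exact: le_trans (normr_ge0 _) hQ.
  apply: sq_le_norm => //; first by apply: mulr_ge0.
  rewrite -!(ipnorm H) in hw N2 *.
  rewrite exprMn -(ipnorm H).
  rewrite !(ipDl H, ipDr H, ipZl H, ipZr H) (ipC H (Q w) w).
  set W := ip w w in hw N2 *; set P := ip w (Q w) in hw *; set N := ip (Q w) (Q w) in N2 *.
  have W0 : 0 <= W by apply: ipxx_ge0.
  have h1 : c * P <= - (c * lam * W).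
    have := ler_wpM2l (ltW c0) (_ : P <= - (lam * W)); rewrite mulrN mulrA; apply; lra.
  have h2a : c * N <= c * (C ^+ 2 * W) := ler_wpM2l (ltW c0) N2.
  have h2b : c * (C ^+ 2 * W) <= lam * W by rewrite mulrA; exact: (ler_wpM2r W0 cC).
  have h2 : c * (c * N) <= c * lam * W.
    by rewrite -mulrA; exact: (ler_wpM2l (ltW c0) (le_trans h2a h2b)).
  have h3 : (1 - c * lam) * W <= k ^+ 2 * W.
    apply: ler_wpM2r => //; rewrite /k; have := sqr_ge0 (c * lam / 2); lra.
  lra.
have [x Tx] := @my_banach _ _ T k k0 k1 contr.
have Mx : M x (Q x).
  have := HJ (x + c *: Q x); rewrite -/(T x) Tx.
  by rewrite addrAC subrr add0r scalerA mulVf ?gt_eqF // scale1r.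
exists (x, Q x); apply/seteqP; split.
  move=> [y v] [My Fv]; have Fv' : v = Q y := Fv; have My' : M y v := My.
  subst v; by have := uniq _ _ My' Mx => ->.
by move=> p /= ->; split.
Qed.
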